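(* Let $n\ge1$, $0<\alpha\le 1$, let $\Omega\subset\mathbb{R}^n$ be a bounded domain, and let $f\in C(\Omega)$ be bounded with $f\le0$. Let $u$ be a bounded viscosity supersolution to $\mathcal{L}_\infty u=f$ in $\Omega$. Then for every $x\in\Omega$, $$\mathcal{L}^-_\infty u(x)=\inf_{y\in\mathbb{R}^n}\frac{u(y)-u(x)}{|x-y|^\alpha}=\inf_{y\in\mathbb{R}^n\setminus\Omega}\frac{u(y)-u(x)}{|y-x|^\alpha},$$ i.e. the infimum defining $\mathcal{L}^-_\infty u(x)$ equals the infimum taken only over the complement of $\Omega$.
   Context: For $0<\alpha\le1$ and a function $\varphi:\mathbb{R}^n\to\mathbb{R}$, the nonlocal infinity Laplacian is $\mathcal{L}_\infty\varphi(x)=\mathcal{L}^+_\infty\varphi(x)+\mathcal{L}^-_\infty\varphi(x)$, where $\mathcal{L}^+_\infty\varphi(x)=\sup_{y\in\mathbb{R}^n}\frac{\varphi(y)-\varphi(x)}{|x-y|^\alpha}$ and $\mathcal{L}^-_\infty\varphi(x)=\inf_{y\in\mathbb{R}^n}\frac{\varphi(y)-\varphi(x)}{|x-y|^\alpha}$ (with $y\neq x$). Viscosity supersolution: a lower semicontinuous $u:\mathbb{R}^n\to\mathbb{R}$ with $|u(x)|\le C(1+|x|)^\beta$ for some $C>0$, $\beta<\alpha$, is a viscosity supersolution to $\mathcal{L}_\infty u=f$ in $\Omega$ if for every $x_0\in\Omega$ and every locally Lipschitz continuous $\varphi:\mathbb{R}^n\to\mathbb{R}$ with $|\varphi(x)|\le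 C(1+|x|)^\beta$ for some $C>0$, $\beta<\alpha$, such that $\varphi(x_0)=u(x_0)$ and $u\ge\varphi$ on $\mathbb{R}^n$, one has $\mathcal{L}_\infty\varphi(x_0)\le f(x_0)$. *)

(* Defs.v *)
From HB Require Import structures.
From mathcomp Require Import all_boot all_order all_algebra.
From mathcomp Require Import all_classical all_reals all_analysis.
Set Implicit Arguments. Unset Strict Implicit. Unset Printing Implicit Defensive.
Import Order.TTheory GRing.Theory Num.Theory.
Import numFieldNormedType.Exports.
Local Open Scope classical_set_scope.
Local Open Scope ring_scope.

Section NonlocalInfinityLaplacian.
Variable R : realType.
Variable n : nat.
Implicit Types (x y z : 'rV[R]_n) (u phi : 'rV[R]_n -> R).

Definition enorm x : R := Num.sqrt (\sum_(i < n) (x ord0 i) ^+ 2).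
Definition edist x y : R := enorm (x - y).

Definition dq (alpha : R) phi x y : R := (phi y - phi x) / (edist x y `^ alpha).

Definition Lplus (alpha : R) phi x : \bar R :=
  ereal_sup [set (dq alpha phi x y)%:E | y in [set y | y != x]].
Definition Lminus (alpha : R) phi x : \bar R :=
  ereal_inf [set (dq alpha phi x y)%:E | y in [set y | y != x]].
Definition Linf (alpha : R) phi x : \bar R := (Lplus alpha phi x + Lminus alpha phi x)%E.

Definition growth_ok (alpha : R) phi : Prop :=
  exists C beta : R, 0 < C /\ beta < alpha /\
    forall x, `|phi x| <= C * (1 + enorm x) `^ beta.

Definition lower_semicont u : Prop :=
  forall x (e : R), 0 < e -> exists d : R, 0 < d /\
    forall y, edist x y < d -> u x - e < u y.

Definition locally_lipschitz phi : Prop :=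
  forall x, exists r L : R, 0 < r /\
    forall y z, edist x y < r -> edist x z < r -> `|phi y - phi z| <= L * edist y z.

Definition visc_supersol (alpha : R) (Omega : set 'rV[R]_n) (f : 'rV[R]_n -> R) u : Prop :=
  lower_semicont u /\ growth_ok alpha u /\
  forall x0 phi, Omega x0 -> locally_lipschitz phi -> growth_ok alpha phi ->
    phi x0 = u x0 -> (forall x, phi x <= u x) ->
    (Linf alpha phi x0 <= (f x0)%:E)%E.

Definition bounded_domain (Omega : set 'rV[R]_n) : Prop :=
  Omega !=set0 /\ open Omega /\ connected Omega /\
  exists M : R, forall x, Omega x -> enorm x <= M.

End NonlocalInfinityLaplacian.

(* Main.v *)
Require Import Defs.
From HB Require Import structures.
From mathcomp Require Import all_boot all_order all_algebra.
From mathcomp Require Import all_classical all_reals all_analysis.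
Import Order.TTheory GRing.Theory Num.Theory.
Import numFieldNormedType.Exports.
From mathcomp Require Import ring lra.
Local Open Scope classical_set_scope.
Local Open Scope ring_scope.
Section H.
Variable R : realType.
Variable n : nat.
Implicit Types (x y z v w : 'rV[R]_n).

Lemma sumsq_ge0 (a : 'I_n -> R) : 0 <= \sum_i a i ^+ 2.
Proof. by apply: sumr_ge0 => i _; exact: sqr_ge0. Qed.

Lemma enorm_ge0 v : 0 <= enorm v.
Proof. exact: sqrtr_ge0. Qed.

Lemma enorm_sq v : enorm v ^+ 2 = \sum_i (v ord0 i) ^+ 2.
Proof. by rewrite /enorm sqr_sqrtr // sumsq_ge0. Qed.

Lemma enorm_eq0 v : enorm v = 0 -> v = 0.
Proof.
move=> h; have : \sum_i (v ord0 i) ^+ 2 = 0 by rewrite -enorm_sq h expr0n.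
move/eqP; rewrite psumr_eq0; last by move=> i _; exact: sqr_ge0.
move/allP => H; apply/rowP => i; rewrite mxE.
by have := H i (mem_index_enum _); rewrite /= sqrf_eq0 => /eqP.
Qed.

Lemma coord_le v i : `|v ord0 i| <= enorm v.
Proof.
rewrite -(ler_pXn2r (n:=2)) // ?nnegrE ?enorm_ge0 // enorm_sq real_normK ?num_real //.
rewrite (bigD1 i) //= lerDl; apply: sumr_ge0 => j _; exact: sqr_ge0.
Qed.

Lemma sumsq_le (I : Type) (s : seq I) (a : I -> R) : (forall i, 0 <= a i) ->
  \sum_(i <- s) a i ^+ 2 <= (\sum_(i <- s) a i) ^+ 2.
Proof.
move=> a0; elim: s => [|j s IH]; first by rewrite !big_nil expr0n.
rewrite !big_cons sqrrD -addrA lerD2l; apply: le_trans IH _.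
rewrite lerDr; apply: mulrn_wge0; apply: mulr_ge0 => //.
by apply: sumr_ge0.
Qed.

Lemma enorm_le_sum v : enorm v <= \sum_i `|v ord0 i|.
Proof.
rewrite -(ler_pXn2r (n:=2)) // ?nnegrE ?enorm_ge0 ?sumr_ge0 // enorm_sq.
have := @sumsq_le _ (index_enum 'I_n) (fun i => `|v ord0 i|) (fun i => normr_ge0 _).
apply: le_trans.
by apply: ler_sum => i _; rewrite real_normK ?num_real.
Qed.

Lemma enormN v : enorm (- v) = enorm v.
Proof. by rewrite /enorm; congr Num.sqrt; apply: eq_bigr => i _; rewrite mxE sqrrN. Qed.

Lemma quad_expand (a b : 'I_n -> R) t :
  \sum_i (a i * t + b i) ^+ 2 =
  t ^+ 2 * \sum_i a i ^+ 2 + (2 * t) * \sum_i (a i * b i) + \sum_i b i ^+ 2.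
Proof.
rewrite !mulr_sumr -!big_split /=; apply: eq_bigr => i _; ring.
Qed.

Lemma cauchy_schwarz (a b : 'I_n -> R) :
  \sum_i a i * b i <= Num.sqrt (\sum_i a i ^+ 2) * Num.sqrt (\sum_i b i ^+ 2).
Proof.
set A := \sum_i a i ^+ 2; set B := \sum_i b i ^+ 2; set P := \sum_i a i * b i.
have A0 : 0 <= A := sumsq_ge0 a.
have B0 : 0 <= B := sumsq_ge0 b.
have [P0|P0] := lerP P 0.
  by apply: le_trans P0 _; apply: mulr_ge0; exact: sqrtr_ge0.
have Q t : 0 <= t ^+ 2 * A + (2 * t) * P + B.
  by rewrite -quad_expand; apply: sumr_ge0 => i _; exact: sqr_ge0.
suff PAB : P ^+ 2 <= A * B.
  rewrite -sqrtrM // -(ger0_norm (ltW P0)) -sqrtr_sqr.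
  by rewrite ler_sqrt // mulr_ge0.
have [A00|Apos] := eqVneq A 0.
  have := Q (- (B + 1) / (2 * P)).
  have e : 2 * (- (B + 1) / (2 * P)) * P = - (B + 1).
    by field; rewrite gt_eqF.
  rewrite A00 mulr0 add0r e => h; exfalso; lra.
have Ap : 0 < A by rewrite lt_def Apos A0.
have := Q (- P / A); rewrite -(pmulr_rge0 _ Ap) => h.
have e : A * ((- P / A) ^+ 2 * A + 2 * (- P / A) * P + B) = A * B - P ^+ 2.
  by field; rewrite gt_eqF.
by rewrite e subr_ge0 in h.
Qed.

Lemma enorm_triangle v w : enorm (v + w) <= enorm v + enorm w.
Proof.
rewrite -(ler_pXn2r (n:=2)) // ?nnegrE ?enorm_ge0 ?addr_ge0 ?enorm_ge0 //.
rewrite enorm_sq sqrrD !enorm_sq.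
have -> : \sum_i (v + w) ord0 i ^+ 2 =
  \sum_i v ord0 i ^+ 2 + 2 * \sum_i (v ord0 i * w ord0 i) + \sum_i w ord0 i ^+ 2.
  rewrite mulr_sumr -!big_split /=; apply: eq_bigr => i _; rewrite mxE; ring.
rewrite lerD2r lerD2l mulr_natl lerMn2r /=.
exact: cauchy_schwarz.
Qed.

Lemma edist_sym x y : Defs.edist x y = Defs.edist y x.
Proof. by rewrite /Defs.edist -enormN opprB. Qed.

Lemma edist_tri x y z : Defs.edist x z <= Defs.edist x y + Defs.edist y z.
Proof.
by rewrite /Defs.edist (_ : (x - z = (x - y) + (y - z))%R) ?enorm_triangle // addrA subrK.
Qed.

Lemma edist_ge0 x y : 0 <= Defs.edist x y.
Proof. exact: enorm_ge0. Qed.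

Lemma edistxx x : Defs.edist x x = 0.
Proof.
rewrite /Defs.edist subrr /enorm (eq_bigr (fun _ => 0)) ?big1 ?sqrtr0 // => i _.
by rewrite mxE expr0n.
Qed.

Lemma edist_gt0 x y : x != y -> 0 < Defs.edist x y.
Proof.
move=> xy; rewrite lt_def edist_ge0 andbT; apply/eqP => /enorm_eq0 /eqP.
by rewrite subr_eq0 (negbTE xy).
Qed.

Lemma edist_rev x y w : `|Defs.edist x y - Defs.edist x w| <= Defs.edist y w.
Proof.
rewrite ler_norml; apply/andP; split.
  have := edist_tri x y w; lra.
have := edist_tri x w y; rewrite (edist_sym w y); lra.
Qed.

Lemma nbhs_edist z (d : R) : 0 < d -> nbhs z [set w | Defs.edist z w < d].
Proof.
move=> d0; apply/nbhs_ballP; exists (d / n.+1%:R).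
  by rewrite /= divr_gt0 // ltr0n.
move=> w [_ H] /=.
apply: (le_lt_trans (enorm_le_sum _)).
apply: (le_lt_trans (y := \sum_(i < n) (d / n.+1%:R))).
  apply: ler_sum => i _; rewrite !mxE; have := H ord0 i.
  by rewrite /ball /= => /ltW.
rewrite sumr_const card_ord -[_ *+ n]mulr_natr -mulrA gtr_pMr // mulrC.
by rewrite ltr_pdivrMr ?ltr0n // mul1r ltr_nat.
Qed.

End H.

Section P.
Variable R : realType.
Variable alpha : R.
Hypothesis a0 : 0 < alpha.
Hypothesis a1 : alpha <= 1.

Lemma pw_mono (a b : R) : 0 <= a -> a <= b -> a `^ alpha <= b `^ alpha.
Proof. by move=> a0' ab; apply: ge0_ler_powR; rewrite ?nnegrE //; [exact: ltW|exact: le_trans ab]. Qed.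

Lemma pw_anti (a b : R) : 0 < b -> b <= a -> a `^ (alpha - 1) <= b `^ (alpha - 1).
Proof.
move=> b0 ba; have a0' : 0 < a by exact: lt_le_trans ba.
have -> : alpha - 1 = - (1 - alpha) by ring.
rewrite !powRN lef_pV2 ?posrE ?powR_gt0 //.
by apply: ge0_ler_powR; rewrite ?nnegrE ?subr_ge0 // ltW.
Qed.

Lemma pw_split (a : R) : 0 <= a -> a `^ alpha = a * a `^ (alpha - 1).
Proof. by move=> a0'; rewrite mulr_powRB1. Qed.

Lemma pw_lip (s a b : R) : 0 < s -> s <= b -> b <= a ->
  a `^ alpha - b `^ alpha <= s `^ (alpha - 1) * (a - b).
Proof.
move=> s0 sb ba; have b0 : 0 < b by exact: lt_le_trans sb.
have a0' : 0 < a by exact: lt_le_trans ba.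
rewrite (pw_split _ (ltW a0')) (pw_split _ (ltW b0)).
have h1 := pw_anti _ _ b0 ba.
have h2 := pw_anti _ _ s0 sb.
have h3 : 0 <= a `^ (alpha - 1) := powR_ge0 _ _.
apply: (@le_trans _ _ ((a - b) * b `^ (alpha - 1))).
  rewrite mulrBl lerD2r ler_pM2l //.
by rewrite mulrC; apply: ler_wpM2r; rewrite ?subr_ge0.
Qed.

Lemma pw0 : 0 `^ alpha = 0.
Proof. by rewrite powR0 // gt_eqF. Qed.

Lemma pw_sub (a b : R) : 0 <= a -> 0 <= b ->
  (a + b) `^ alpha <= a `^ alpha + b `^ alpha.
Proof.
rewrite le_eqVlt => /predU1P[<- _|ap]; first by rewrite add0r pw0 add0r.
rewrite le_eqVlt => /predU1P[<-|bp]; first by rewrite addr0 pw0 addr0.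
have abp : 0 < a + b by rewrite addr_gt0.
rewrite (pw_split _ (ltW abp)) (pw_split _ (ltW ap)) (pw_split _ (ltW bp)) mulrDl.
apply: lerD; rewrite ler_pM2l //; apply: pw_anti => //.
  by rewrite lerDl ltW.
by rewrite lerDr ltW.
Qed.

Lemma pw_holder (a b : R) : 0 <= a -> 0 <= b ->
  `|a `^ alpha - b `^ alpha| <= `|a - b| `^ alpha.
Proof.
wlog ba : a b / b <= a.
  move=> W a0X b0X; case/orP: (le_total a b) => h; last exact: W.
  by rewrite distrC (distrC a); apply: W.
move=> a0' b0'; rewrite ger0_norm ?subr_ge0 ?pw_mono // ger0_norm ?subr_ge0 //.
have hab : 0 <= a - b by rewrite subr_ge0.
have := pw_sub _ _ b0' hab; rewrite addrC subrK => h.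
by rewrite lerBlDl.
Qed.

End P.

Section M.
Variable R : realType.
Variable n : nat.

Lemma lsc_min (K : set 'rV[R]_n) (g : 'rV[R]_n -> R) (y0 : 'rV[R]_n) :
  compact K -> K y0 ->
  (forall z t, t < g z -> exists2 d, 0 < d & forall w, Defs.edist z w < d -> t < g w) ->
  exists2 z, K z & forall w, K w -> g z <= g w.
Proof.
move=> cK Ky0 lsc.
pose D := [set t : R | exists w, K w /\ g w < t].
pose E := fun t => [set w | K w /\ g w < t].
have D0 : D (g y0 + 1) by exists y0; split => //; rewrite ltrDl.
have FF : Filter (filter_from D E).
  apply: filter_from_filter; first by exists (g y0 + 1).
  move=> i j [wi [Kwi gi]] [wj [Kwj gj]]; exists (Num.min i j).
    case/orP: (le_total i j) => h; [rewrite min_l //; by exists wi|].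
    by rewrite min_r //; exists wj.
  by move=> w [Kw]; rewrite lt_min => /andP[h1 h2].
have PF : ProperFilter (filter_from D E).
  by apply: filter_from_proper => // t [w [Kw gw]]; exists w.
have FK : filter_from D E K by exists (g y0 + 1) => // w [].
have [z [Kz clz]] := cK _ PF FK.
exists z => // w Kw; rewrite leNgt; apply/negP => gwz.
pose t := (g w + g z) / 2.
have tz : t < g z by rewrite /t; lra.
have wt : g w < t by rewrite /t; lra.
have [d d0 hd] := lsc z t tz.
have Et : filter_from D E (E t) by exists t => //; exists w.
have [v [[Kv gv] dv]] := clz _ _ Et (@nbhs_edist R n z d d0).
by have := hd v dv; lra.
Qed.

End M.

Lemma max_lip (R : realType) (a b c d : R) :
  `|Num.max a b - Num.max c d| <= `|a - c| + `|b - d|.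
Proof.
have h1 := ler_norm (a - c); have h2 := ler_norm (c - a); rewrite distrC in h2.
have h3 := ler_norm (b - d); have h4 := ler_norm (d - b); rewrite distrC in h4.
rewrite ler_norml; case/orP: (le_total a b) => ab; case/orP: (le_total c d) => cd;
  rewrite ?(max_r ab) ?(max_l ab) ?(max_r cd) ?(max_l cd); apply/andP; split; lra.
Qed.

Lemma pw_lip_abs (R : realType) (alpha s a b : R) : 0 < alpha -> alpha <= 1 ->
  0 < s -> s <= a -> s <= b ->
  `|a `^ alpha - b `^ alpha| <= s `^ (alpha - 1) * `|a - b|.
Proof.
move=> a0 a1 s0; wlog ba : a b / b <= a.
  move=> W sa sb; case/orP: (le_total a b) => h; last exact: W.
  by rewrite distrC (distrC a); apply: W.
move=> sa sb; rewrite (ger0_norm (x := a - b)) ?subr_ge0 // ger0_norm.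
  exact: pw_lip.
by rewrite subr_ge0; apply: pw_mono => //; apply: le_trans sb; exact: ltW.
Qed.

Lemma arith1 {R : realType} {c q a b e : R} : c <= q -> q + e <= a -> 0 < b ->
  c - b / 2 - a <= - e.
Proof. move=> *; lra. Qed.

Lemma arith2 {R : realType} {a b c P Q : R} :
  b - (c + Q) <= a - (c + P) -> c - - (b - (c + Q)) + P <= a.
Proof. move=> *; lra. Qed.

Lemma arith3 {R : realType} {A A' B B' c k1 k2 e : R} :
  `|A - A'| <= k1 * e -> `|B - B'| <= k2 * e ->
  `|A - A'| + (`|B - B'| + `|c - c|) <= (k1 + k2) * e.
Proof. rewrite subrr normr0 addr0 => *; rewrite mulrDl; lra. Qed.

Lemma arith6 {R : realType} {c P Q N e : R} :
  P - Q <= N -> N < e -> c + P < c + Q + e.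
Proof. move=> *; lra. Qed.

Lemma arith5 {R : realType} {a b c e : R} :
  b - e / 2 <= a -> e / 2 - c <= a - (b + c - e).
Proof. move=> *; lra. Qed.

Lemma core (R : realType) (n : nat) (alpha : R) (Omega : set 'rV[R]_n)
  (f u : 'rV[R]_n -> R) (M B m : R) (x : 'rV[R]_n) :
  0 < alpha -> alpha <= 1 ->
  (forall y, Omega y -> Defs.enorm y <= B) ->
  (forall y, Omega y -> f y <= 0) ->
  (forall y, `|u y| <= M) ->
  visc_supersol alpha Omega f u ->
  Omega x -> m <= 0 ->
  (forall y, ~ Omega y -> u x + m * Defs.edist x y `^ alpha <= u y) ->
  forall y, Omega y -> u x + m * Defs.edist x y `^ alpha <= u y.
Proof.
move=> a0 a1 OB f0 uM [ulsc [_ sup]] Ox m0 hc y Oy.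
rewrite leNgt; apply/negP => hy.
have M0 : 0 <= M := le_trans (normr_ge0 (u x)) (uM x).
have uMl w : - M <= u w by have := uM w; rewrite ler_norml => /andP[].
have uMr w : u w <= M by have := uM w; rewrite ler_norml => /andP[].
pose C w := u x + m * Defs.edist x w `^ alpha.
pose g w := u w - C w.
pose K := [set v : 'rV[R]_n | forall i, `[- B, B]%classic (v ord0 i)].
have cK : compact K.
  by apply: (@rV_compact _ _ (fun=> `[- B, B]%classic)) => i; exact: segment_compact.
have OK w : Omega w -> K w.
  move=> Ow i; rewrite /= in_itv /= -ler_norml.
  exact: le_trans (@coord_le R n w i) (OB _ Ow).
have lscg : forall z t, t < g z ->
    exists2 d, 0 < d & forall w, Defs.edist z w < d -> t < g w.
  move=> z t tz; pose e := (g z - t) / 2.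
  have e0 : 0 < e by rewrite /e; lra.
  have [d1 [d10 hd1]] := ulsc z e e0.
  pose d2 := (e / (`|m| + 1)) `^ (alpha^-1).
  have m1 : 0 < `|m| + 1 by rewrite ltr_pwDr.
  have d20 : 0 < d2 by apply: powR_gt0; rewrite divr_gt0.
  exists (Num.min d1 d2); first by rewrite lt_min d10 d20.
  move=> w; rewrite lt_min => /andP[w1 w2].
  have hu := hd1 w w1.
  have hC : C w < C z + e.
    have h1 : `|Defs.edist x w `^ alpha - Defs.edist x z `^ alpha| <= e / (`|m| + 1).
      apply: le_trans (pw_holder _ _ a0 a1 _ _ (edist_ge0 _ _ _ _) (edist_ge0 _ _ _ _)) _.
      have -> : e / (`|m| + 1) = d2 `^ alpha.
        by rewrite /d2 -powRrM mulVf ?gt_eqF // powRr1 // divr_ge0 // ltW.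
      apply: pw_mono => //; apply: le_trans (ltW w2).
      by rewrite distrC; apply: edist_rev.
    have key : `|m| * `|Defs.edist x w `^ alpha - Defs.edist x z `^ alpha| < e.
      apply: le_lt_trans (ler_wpM2l (normr_ge0 _) h1) _.
      by rewrite mulrA ltr_pdivrMr // mulrC ltr_pM2l // ltrDl.
    have h := ler_norm (m * (Defs.edist x w `^ alpha - Defs.edist x z `^ alpha)).
    rewrite normrM mulrBr in h.
    rewrite /C; exact: arith6 h key.
  have -> : t = g z - 2 * e by rewrite /e; field.
  rewrite /g; move: hu hC; generalize (u w) (u z) (C w) (C z) => a b c d h1 h2.
  lra.
have [z Kz zmin] := lsc_min _ _ _ _ _ cK (OK y Oy) lscg.
have gy : g y < 0 by rewrite /g subr_lt0.
have gz : g z < 0 := le_lt_trans (zmin y (OK y Oy)) gy.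
have cg w : ~ Omega w -> 0 <= g w by move=> /hc h; rewrite /g subr_ge0.
have glob w : g z <= g w.
  have [Ow|nOw] := pselect (Omega w); first exact: zmin _ (OK _ Ow).
  exact: le_trans (ltW gz) (cg _ nOw).
have Oz : Omega z.
  by apply: contrapT => /cg h; have := lt_le_trans gz h; rewrite ltxx.
have zx : x != z.
  apply/negP => /eqP xz; move: gz; rewrite -xz /g /C edistxx pw0 // mulr0 addr0 subrr.
  by rewrite ltxx.
pose del := - g z.
have del0 : 0 < del by rewrite /del oppr_gt0.
pose s := Defs.edist x z.
have s0 : 0 < s by exact: edist_gt0.
have [d [d0 hd]] := ulsc x (del / 2) (divr_gt0 del0 (ltr0Sn _ 1)).
pose d' := Num.min d s.
have d'0 : 0 < d' by rewrite lt_min d0 s0.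
pose L := (`|u x| + M) / d'.
have L0 : 0 <= L by rewrite divr_ge0 // ?addr_ge0 // ltW.
have Lbig r : d' <= r -> `|u x| + M <= L * r.
  move=> dr; apply: le_trans (ler_wpM2l L0 dr).
  by rewrite /L divfK // gt_eqF.
pose tent w := u x - del / 2 - L * Defs.edist x w.
pose psi1 w := u x - del + m * (Num.max (Defs.edist x w) s) `^ alpha.
pose psi w := Num.max (psi1 w) (Num.max (tent w) (- (M + 1))).
have uxn : u x <= `|u x| := ler_norm _.
have tent_far w : d' <= Defs.edist x w -> tent w <= u w.
  move=> dw; apply: le_trans (uMl w); rewrite /tent.
  exact: (arith1 uxn (Lbig _ dw) del0).
have dd : d' <= d by rewrite /d' ge_min lexx.
have tent_le w : tent w <= u w.
  have [h|h] := ltP (Defs.edist x w) d'; last exact: tent_far.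
  apply: le_trans (ltW (hd w (lt_le_trans h dd))).
  by rewrite /tent gerBl mulr_ge0 // edist_ge0.
have lowb w : - (M + 1) <= u w.
  by apply: le_trans (uMl w); rewrite lerN2 lerDl.
have psi1_le w : psi1 w <= u w.
  apply: (@le_trans _ _ (u x - del + m * Defs.edist x w `^ alpha)).
    rewrite /psi1 lerD2l; apply: ler_wnM2l => //; apply: pw_mono => //.
      exact: edist_ge0.
    by rewrite le_max lexx.
  have := glob w; rewrite /del /g /C; exact: arith2.
have psi1z : psi1 z = u z.
  by rewrite /psi1 /s maxxx /del /g /C; ring.
have psiz : psi z = u z.
  by rewrite /psi psi1z max_l // ge_max tent_le lowb.
have psi_le w : psi w <= u w.
  by rewrite /psi !ge_max psi1_le tent_le lowb.
have sp : 0 < s `^ (alpha - 1) by apply: powR_gt0.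
have lip : locally_lipschitz psi.
  move=> w0; exists 1, (`|m| * s `^ (alpha - 1) + L); split => // w v _ _.
  have hr := edist_rev _ _ x w v.
  apply: le_trans (max_lip _ _ _ _ _) _.
  apply: le_trans (lerD (lexx _) (max_lip _ _ _ _ _)) _.
  apply: arith3.
    rewrite /psi1 opprD addrACA subrr add0r -mulrBr normrM -mulrA ler_wpM2l //.
    apply: le_trans (pw_lip_abs _ _ _ _ _ a0 a1 s0 _ _) _.
    - by rewrite le_max lexx orbT.
    - by rewrite le_max lexx orbT.
    apply: ler_wpM2l; first exact: ltW.
    apply: le_trans (max_lip _ _ _ _ _) _.
    by rewrite subrr normr0 addr0.
  rewrite /tent opprD addrACA subrr add0r opprK addrC -mulrBr normrM.
  rewrite (ger0_norm L0) ler_wpM2l // distrC; exact: hr.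
have grow : growth_ok alpha psi.
  exists (M + 1), 0; split; first by rewrite ltr_pwDr.
  split => // w; rewrite powRr0 mulr1 ler_norml; apply/andP; split.
    by rewrite /psi !le_max lexx !orbT.
  by apply: le_trans (psi_le w) _; apply: le_trans (uMr w) _; rewrite lerDl.
have Hsup := sup z psi Oz lip grow psiz psi_le.
rewrite /Linf in Hsup.
pose ps := s `^ alpha.
have ps0 : 0 < ps by apply: powR_gt0.
have uz : u z = u x + m * ps - del by rewrite /del /g /C /ps /s; ring.
have tx : u x - del / 2 <= psi x.
  by rewrite /psi !le_max /tent edistxx mulr0 subr0 lexx !orbT.
have LP : (((del / 2) / ps - m)%:E <= Lplus alpha psi z)%E.
  apply: le_ereal_sup_tmp; exists (dq alpha psi z x)%:E; first by exists x.
  rewrite lee_fin /dq psiz (edist_sym _ _ z x) -/s -/ps ler_pdivlMr //.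
  rewrite mulrBl divfK ?gt_eqF // uz.
  exact: arith5 tx.
have LM : (m%:E <= Lminus alpha psi z)%E.
  apply/ereal_infP => _ [w wz <-].
  have zw : z != w by rewrite eq_sym.
  have pz : 0 < Defs.edist z w `^ alpha by apply: powR_gt0; exact: edist_gt0.
  rewrite lee_fin /dq ler_pdivlMr // psiz -psi1z.
  apply: (@le_trans _ _ (psi1 w - psi1 z)); last first.
    by rewrite lerD2r /psi le_max lexx.
  have -> : psi1 w - psi1 z =
      m * ((Num.max (Defs.edist x w) s) `^ alpha - s `^ alpha).
    by rewrite /psi1 maxxx /s; ring.
  apply: (ler_wnM2l m0).
  case/orP: (le_total (Defs.edist x w) s) => h.
    rewrite (max_r h) subrr; exact: powR_ge0.
  rewrite (max_l h) lerBlDl.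
  apply: le_trans (pw_sub _ _ a0 a1 _ _ (ltW s0) (edist_ge0 _ _ z w)).
  apply: pw_mono => //; first exact: edist_ge0.
  exact: edist_tri.
have := leeD LP LM; rewrite -EFinD subrK => h.
have := le_trans h Hsup; rewrite lee_fin => h2.
have pos : 0 < del / 2 / ps by rewrite !divr_gt0.
by have := lt_le_trans pos (le_trans h2 (f0 z Oz)); rewrite ltxx.
Qed.

Lemma arith7 {R : realType} {a b M e P : R} : 0 < e ->
  `|a| <= M -> `|b| <= M -> 2 * M / e + 1 <= P -> a - b <= e * P.
Proof.
move=> e0 ha hb hP.
have h1 : 2 * M <= e * (2 * M / e) by rewrite [e * _]mulrC divfK ?gt_eqF.
have h2 := ler_wpM2l (ltW e0) hP.
rewrite mulrDr mulr1 in h2.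
move: ha hb; rewrite !ler_norml => /andP[? ?] /andP[? ?]; lra.
Qed.

Lemma arith8 {R : realType} {a b c d : R} :
  a + b + c <= d -> d <= a -> 0 <= b -> 0 < c -> False.
Proof. move=> *; lra. Qed.

Lemma arith9 {R : realType} {a b T c d : R} :
  a + b + T <= c -> c <= d + b -> 0 <= a -> T <= d.
Proof. move=> *; lra. Qed.

Theorem mainTheorem2 (R : realType) (n : nat) (alpha : R)
  (Omega : set 'rV[R]_n) (f u : 'rV[R]_n -> R) :
  (0 < n)%N -> 0 < alpha -> alpha <= 1 ->
  bounded_domain Omega ->
  {within Omega, continuous f} ->
  (exists M : R, forall x, Omega x -> `|f x| <= M) ->
  (forall x, Omega x -> f x <= 0) ->
  (exists M : R, forall x, `|u x| <= M) ->
  visc_supersol alpha Omega f u ->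
  forall x, Omega x ->
    Lminus alpha u x =
    ereal_inf [set (dq alpha u x y)%:E | y in ~` Omega].
Proof.
move=> n0 a0 a1 [_ [_ [_ [B OB]]]] _ _ f0 [M uM] vs x Ox.
have M0 : 0 <= M := le_trans (normr_ge0 (u x)) (uM x).
set S := [set (dq alpha u x y)%:E | y in ~` Omega].
have xy_ne y : ~ Omega y -> y != x.
  by move=> nOy; apply/eqP => yx; apply: nOy; rewrite yx.
have mle0 : (ereal_inf S <= 0)%E.
  apply/lee_addgt0Pr => e e0; rewrite add0e.
  pose T0 := (2 * M / e + 1) `^ (alpha^-1).
  have T00 : 0 < T0 by apply: powR_gt0; rewrite ltr_pwDr // divr_ge0 // ?mulr_ge0 // ltW.
  pose t := `|B| + enorm x + T0.
  pose y : 'rV[R]_n := const_mx t.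
  have t0 : 0 <= t by rewrite addr_ge0 ?addr_ge0 ?enorm_ge0 // ltW.
  have ey : t <= enorm y.
    have := coord_le _ _ y (Ordinal n0); rewrite mxE ger0_norm //.
  have nOy : ~ Omega y.
    move=> Oy; have := le_trans ey (OB _ Oy); rewrite /t.
    move=> h; exact: arith8 h (ler_norm B) (enorm_ge0 _ _ x) T00.
  have dxy : T0 <= Defs.edist x y.
    have h := enorm_triangle _ _ (y - x) x; rewrite subrK in h.
    have : enorm (y - x) = Defs.edist x y by rewrite -edist_sym.
    move=> E; rewrite E in h; exact: arith9 ey h (normr_ge0 B).
  apply: ge_ereal_inf; exists (dq alpha u x y)%:E; first by exists y.
  rewrite lee_fin /dq.
  have pd : 0 < Defs.edist x y `^ alpha.
    by apply: powR_gt0; apply: lt_le_trans dxy.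
  rewrite ler_pdivrMr //.
  apply: arith7 => //.
  apply: le_trans (pw_mono _ _ a0 _ _ (ltW T00) dxy).
  rewrite /T0 -powRrM mulVf ?gt_eqF // powRr1 //.
  by rewrite addr_ge0 // divr_ge0 // ?mulr_ge0 // ltW.
apply/eqP; rewrite eq_le; apply/andP; split.
  apply: ereal_inf_le_tmp; apply: image_subset => y /= nOy.
  exact: xy_ne.
apply/ereal_infP => _ [y yx <-].
have [Oy|nOy] := pselect (Omega y); last first.
  by apply: ereal_inf_lbound; exists y.
move: mle0; case E: (ereal_inf S) => [m| |]; [|by []|by move=> _; exact: leNye].
rewrite lee_fin => m0.
have hc w : ~ Omega w -> u x + m * Defs.edist x w `^ alpha <= u w.
  move=> nOw; have : (ereal_inf S <= (dq alpha u x w)%:E)%E.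
    by apply: ereal_inf_lbound; exists w.
  have pw : 0 < Defs.edist x w `^ alpha.
    by apply: powR_gt0; apply: edist_gt0; rewrite eq_sym; exact: xy_ne.
  rewrite E lee_fin /dq ler_pdivlMr // => h.
  by rewrite -lerBrDl.
have := core _ _ _ _ _ _ _ _ _ x a0 a1 OB f0 uM vs Ox m0 hc y Oy.
have py : 0 < Defs.edist x y `^ alpha.
  by apply: powR_gt0; apply: edist_gt0; rewrite eq_sym.
by rewrite lee_fin /dq ler_pdivlMr // lerBrDl.
Qed.
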